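(* Let $\hat G$ be a $C_2$-graded finite group acting on $\mathbb C[[u,v]]$ by degree-preserving generalized algebra automorphisms preserving $uv$. The matrix factorization $\{u,v\}\in\mathrm{MF}(\mathbb C[[u,v]],uv)$ admits a Real $G$-equivariant structure (i.e. can be lifted to an object of $\mathrm{MF}_{\hat G}(\mathbb C[[u,v]],uv)$) if and only if there exists $\chi\in Z^1(\hat G;\mathbb C^\times_\pi)$ with $\sigma(u)=\chi(\sigma)u$ and $\sigma(v)=\chi(\sigma)^{-1}v$ for all $\sigma\in\hat G$. In that case the set of dg isomorphism classes of Real $G$-equivariant structures on $\{u,v\}$ is in bijection with $H^1(\hat G;\mathbb C[[u,v]]^\times_\pi)$.
   Context: $C_2=\{\pm1\}$; $\pi:\hat G\to C_2$, $G=\ker\pi$. $\mathbb C^\times_\pi$ is $\mathbb C^\times$ with $\hat G$ acting through $\pi$ by complex conjugation; $\mathbb C[[u,v]]^\times_\pi$ is the group of units with $\hat G$ acting through its given action on $\mathbb C[[u,v]]$; $Z^1$, $H^1$ are (normalized) group cocycles and cohomology. A generalized algebra automorphism is a ring automorphism which is $\mathbb C$-linear or $\mathbb C$-antilinear; $\sigma\in\hat G$ is linear iff $\pi(\sigma)=1$. $\mathrm{MF}(S,w)$: objects $(M,d_M)$, $M$ finite rank free $\mathbb Z/2$-graded $S$-module, $d_M$ odd with $d_M^2=w\,\mathrm{id}$; Hom complexes $\mathrm{Hom}_S(M,N)$ with $D(f)=d_Nf-(-1)^{|f|}fd_M$. $\{u,v\}$ is $S\oplus S$ with $d^0=u:M_0\to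 M_1$, $d^1=v:M_1\to M_0$. $M^\sigma$ is $M$ with $r\cdot m=\sigma^{-1}(r)m$. The functors $\rho(\sigma)(M,d_M)=(M^\sigma,d_M^\sigma)$ with identity coherence maps give a Real 2-representation of $G$; a Real $G$-equivariant structure on $M$ is a family of closed degree-0 isomorphisms $u_\sigma:M\to M^\sigma$ with $u_{\sigma_2\sigma_1}=(u_{\sigma_1})^{\sigma_2}\circ u_{\sigma_2}$; $\mathrm{MF}_{\hat G}$ is the category of such pairs with morphisms $f$ satisfying $u'_\sigma f=f^\sigma u_\sigma$. *)

(* Defs.v *)
From HB Require Import structures.
From mathcomp Require Import all_boot all_algebra all_fingroup.
From mathcomp Require Import boolp.
From mathcomp Require Import complex.
From mathcomp Require Import Rstruct.
Set Implicit Arguments. Unset Strict Implicit. Unset Printing Implicit Defensive.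
Import GRing.Theory Num.Theory.
Local Open Scope ring_scope.

(* Formal power series in one variable over R, coefficient n = coefficient of X^n.
   We endow them with the Cauchy product, giving a commutative ring. *)
Record fps (R : Type) : Type := FPS { coef : nat -> R }.

Section FPSRing.
Variable R : comNzRingType.
Local Notation F := (fps R).
HB.instance Definition _ := gen_eqMixin F.
HB.instance Definition _ := gen_choiceMixin F.

Lemma fpsP (f g : F) : (forall n, coef f n = coef g n) -> f = g.
Proof. by case: f; case: g => g f /= H; congr FPS; apply: funext. Qed.

Definition fps0 : F := FPS (fun=> 0).
Definition fpsadd (f g : F) : F := FPS (fun n => coef f n + coef g n).
Definition fpsopp (f : F) : F := FPS (fun n => - coef f n).
Lemma fpsaddA : associative fpsadd.
Proof. by move=> f g h; apply: fpsP => n /=; rewrite addrA. Qed.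
Lemma fpsaddC : commutative fpsadd.
Proof. by move=> f g; apply: fpsP => n /=; rewrite addrC. Qed.
Lemma fpsadd0 : left_id fps0 fpsadd.
Proof. by move=> f; apply: fpsP => n /=; rewrite add0r. Qed.
Lemma fpsaddN : left_inverse fps0 fpsopp fpsadd.
Proof. by move=> f; apply: fpsP => n /=; rewrite addNr. Qed.
HB.instance Definition _ := GRing.isZmodule.Build F fpsaddA fpsaddC fpsadd0 fpsaddN.

Definition fpsmul (f g : F) : F :=
  FPS (fun n => \sum_(i < n.+1) \sum_(j < n.+1 | (i + j == n)%N) coef f i * coef g j).
Definition fps1 : F := FPS (fun n => (n == 0)%:R).

Lemma widen2 (X : nat -> nat -> R) m N : (m <= N)%N ->
  \sum_(a < m.+1) \sum_(b < m.+1 | (a + b == m)%N) X a b =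
  \sum_(a < N.+1) \sum_(b < N.+1 | (a + b == m)%N) X a b.
Proof.
move=> mN.
rewrite (big_ord_widen_cond N.+1 (fun _ => true)
  (fun a : nat => \sum_(b < m.+1 | (a + b == m)%N) X a b)) //.
rewrite [RHS](bigID (fun a : 'I_N.+1 => (a < m.+1)%N)) /=.
rewrite [X in _ = _ + X]big1 ?addr0; last first.
  move=> a am; rewrite big1 // => b /eqP abm.
  by move: am; rewrite -abm ltnS leq_addr.
apply: eq_bigr => a am.
rewrite (big_ord_widen_cond N.+1 (fun b : nat => a + b == m)%N (X a)) //.
by apply: eq_bigl => b; case: eqP => //= <-; rewrite ltnS leq_addl.
Qed.

Lemma exch2 (N M : nat) (P : 'I_N -> 'I_M -> bool) (X : 'I_N -> 'I_M -> R) :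
  \sum_(i < N) \sum_(j < M | P i j) X i j = \sum_(j < M) \sum_(i < N | P i j) X i j.
Proof.
rewrite (eq_bigr (fun i => \sum_(j < M) (if P i j then X i j else 0))); last first.
  by move=> i _; rewrite big_mkcond.
rewrite exchange_big /=; apply: eq_bigr => j _; by rewrite [RHS]big_mkcond.
Qed.

Lemma fpsmulC : commutative fpsmul.
Proof.
move=> f g; apply: fpsP => n /=; rewrite exch2 /=.
by apply: eq_bigr => i _; apply: eq_big => [j|j _]; [by rewrite addnC | by rewrite mulrC].
Qed.

Lemma fpsmul1 : left_id fps1 fpsmul.
Proof.
move=> f; apply: fpsP => n /=; rewrite big_ord_recl /=.
rewrite [X in _ + X = _]big1 ?addr0; last first.
  by move=> i _; rewrite big1 // => j _; rewrite mul0r.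
rewrite (bigD1 (ord_max : 'I_n.+1)) //= big1 ?addr0 ?mul1r // => j /andP[/eqP j0 jn].
by case/eqP: jn; apply: val_inj.
Qed.

Lemma fpsmulDl : left_distributive fpsmul fpsadd.
Proof.
move=> f g h; apply: fpsP => n /=; rewrite -big_split; apply: eq_bigr => i _.
by rewrite -big_split; apply: eq_bigr => j _; rewrite mulrDl.
Qed.


Lemma exch3 (N : nat) (P : 'I_N -> bool) (Q : 'I_N -> 'I_N -> 'I_N -> bool)
  (Z : 'I_N -> 'I_N -> R) :
  \sum_(k < N | P k) \sum_(j < N) \sum_(l < N | Q j l k) Z j l =
  \sum_(j < N) \sum_(l < N) \sum_(k < N | P k && Q j l k) Z j l.
Proof.
rewrite big_mkcond /=.
rewrite (eq_bigr (fun k => \sum_(j < N) \sum_(l < N) (if P k && Q j l k then Z j l else 0))); last first.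
  move=> k _; case: (P k) => /=; last by rewrite big1 // => j _; rewrite big1.
  by apply: eq_bigr => j _; rewrite big_mkcond.
rewrite exchange_big /=; apply: eq_bigr => j _.
rewrite exchange_big /=; apply: eq_bigr => l _.
by rewrite [RHS]big_mkcond.
Qed.

Lemma sum_unique (n i j l : nat) (Y : R) :
  \sum_(k < n.+1 | (i + k == n)%N && (j + l == k)%N) Y =
  if (i + j + l == n)%N then Y else 0.
Proof.
case: (boolP (i + j + l == n)%N) => [/eqP ijl | nijl].
  have jln : (j + l < n.+1)%N by rewrite -ijl ltnS -addnA leq_addl.
  rewrite (bigD1 (Ordinal jln)) /=; last by rewrite addnA ijl !eqxx.
  rewrite big1 ?addr0 // => k /andP[/andP[_ /eqP jlk] nk].
  by case/eqP: nk; apply: val_inj; rewrite /= jlk.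
rewrite big1 // => k /andP[/eqP ik /eqP jlk].
by case/negP: nijl; rewrite -addnA jlk ik.
Qed.

Lemma fpsmulA : associative fpsmul.
Proof.
move=> f g h; apply: fpsP => n /=.
pose T := \sum_(i < n.+1) \sum_(j < n.+1) \sum_(l < n.+1 | (i + j + l == n)%N)
                 coef f i * coef g j * coef h l.
transitivity T.
  apply: eq_bigr => i _.
  transitivity (\sum_(k < n.+1 | (i + k == n)%N) \sum_(j < n.+1) \sum_(l < n.+1 | (j + l == k)%N)
       coef f i * coef g j * coef h l).
    apply: eq_bigr => k /eqP ikn /=; rewrite (widen2 (fun a b => coef g a * coef h b) (N := n)); last by rewrite -ltnS ltn_ord.
    rewrite mulr_sumr; apply: eq_bigr => j _; rewrite mulr_sumr.
    by apply: eq_bigr => l _; rewrite mulrA.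
  rewrite exch3; apply: eq_bigr => j _; rewrite [RHS]big_mkcond; apply: eq_bigr => l _.
  by rewrite sum_unique.
symmetry.
rewrite exch2 /=.
transitivity (\sum_(l < n.+1) \sum_(k < n.+1 | (k + l == n)%N) \sum_(i < n.+1) \sum_(j < n.+1 | (i + j == k)%N)
       coef f i * coef g j * coef h l).
  apply: eq_bigr => l _; apply: eq_bigr => k /eqP kln.
  rewrite /= (widen2 (fun a b => coef f a * coef g b) (N := n)); last by rewrite -ltnS ltn_ord.
  rewrite mulr_suml; apply: eq_bigr => i _; by rewrite mulr_suml.
transitivity (\sum_(l < n.+1) \sum_(i < n.+1) \sum_(j < n.+1 | (i + j + l == n)%N)
       coef f i * coef g j * coef h l).
  apply: eq_bigr => l _.
  rewrite (exch3 (fun k : 'I_n.+1 => (k + l == n)%N) (fun i j k : 'I_n.+1 => (i + j == k)%N)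
     (fun i j => coef f i * coef g j * coef h l)).
  apply: eq_bigr => i _; rewrite [RHS]big_mkcond; apply: eq_bigr => j _.
  rewrite (eq_bigl (fun k : 'I_n.+1 => (l + k == n)%N && (i + j == k)%N)); last first.
    by move=> k; rewrite addnC.
  by rewrite sum_unique -addnA [(l + _)%N]addnC.
rewrite /T exchange_big /=; apply: eq_bigr => i _.
rewrite exch2 /=; apply: eq_bigr => j _.
by apply: eq_bigr.
Qed.

Lemma fps1_neq0 : fps1 != 0.
Proof. by apply/eqP => /(congr1 (fun p : fps R => coef p 0%N)) /= /eqP; rewrite oner_eq0. Qed.

HB.instance Definition _ := GRing.Zmodule_isComNzRing.Build F
  fpsmulA fpsmulC fpsmul1 fpsmulDl fps1_neq0.
End FPSRing.

Definition fpsC (R : comNzRingType) (c : R) : fps R := FPS (fun n => if n == 0%N then c else 0).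
Definition fpsX (R : comNzRingType) : fps R := FPS (fun n => (n == 1%N)%:R).

Definition C : numClosedFieldType := (Rdefinitions.R)[i].

(* S = C[[u,v]] realised as (C[[u]])[[v]] *)
Definition S : comNzRingType := fps (fps C).

(* coefficient of u^i v^j *)
Definition coef2 (f : S) (i j : nat) : C := coef (coef f j) i.

Definition uS : S := fpsC (fpsX C).
Definition vS : S := fpsX (fps C).
Definition sc (c : C) : S := fpsC (fpsC c).

Definition homogeneous (d : nat) (f : S) : Prop :=
  forall i j : nat, (i + j != d)%N -> coef2 f i j = 0.

Definition degree_preserving (s : S -> S) : Prop :=
  forall (d : nat) (f : S), homogeneous d f -> homogeneous d (s f).

(* complex conjugation if b (i.e. pi(sigma) = -1), identity otherwise *)
Definition pconj (b : bool) (z : C) : C := if b then z^* else z.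

Definition gen_alg_aut (b : bool) (s : S -> S) : Prop :=
  [/\ bijective s,
      forall f g, s (f + g) = s f + s g,
      forall f g, s (f * g) = s f * s g,
      s 1 = 1
    & forall (c : C) (f : S), s (sc c * f) = sc (pconj b c) * s f].

(* Action of the C_2-graded group (gT, pi) on C[[u,v]] by degree-preserving
   generalized algebra automorphisms preserving uv; pi x = true means pi(x) = -1. *)
Definition graded_action (gT : finGroupType) (pi : gT -> bool) (act : gT -> S -> S) : Prop :=
  [/\ forall f, act 1%g f = f,
      forall (x y : gT) f, act (x * y)%g f = act x (act y f),
      forall x, gen_alg_aut (pi x) (act x),
      forall x, degree_preserving (act x)
    & forall x, act x (uS * vS) = uS * vS].

Definition Z1_Cpi (gT : finGroupType) (pi : gT -> bool) (chi : gT -> C) : Prop :=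
  [/\ forall x, chi x != 0,
      chi 1%g = 1
    & forall x y : gT, chi (x * y)%g = chi x * pconj (pi x) (chi y)].

Definition unitS (a : S) : Prop := exists b : S, a * b = 1.

Definition Z1_S (gT : finGroupType) (act : gT -> S -> S) (c : gT -> S) : Prop :=
  [/\ forall x, unitS (c x),
      c 1%g = 1
    & forall x y : gT, c (x * y)%g = c x * act x (c y)].

Definition cohomologous (gT : finGroupType) (act : gT -> S -> S) (c c' : gT -> S) : Prop :=
  exists b : S, unitS b /\ forall x : gT, c' x * act x b = b * c x.

(* The matrix factorization {u,v}: M = M_0 (+) M_1 = S (+) S, d^0 = u, d^1 = v.
   A degree-0 map M -> N between such modules is a pair of maps (f0, f1) on the
   two components.  A map f : M -> M^s is S-linear iff f(m+m') = f m + f m' and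
   f (r m) = s^-1(r) f m; we write [semilinear t f] with t = s^-1. *)
Definition semilinear (t : S -> S) (f : S -> S) : Prop :=
  (forall m m' : S, f (m + m') = f m + f m') /\ (forall r m : S, f (r * m) = t r * f m).

(* closedness of a degree-0 map (f0,f1) for the differential of {u,v}
   (the twisted differential d^s has the same underlying map) *)
Definition closed_uv (f0 f1 : S -> S) : Prop :=
  (forall m, uS * f0 m = f1 (uS * m)) /\ (forall m, vS * f1 m = f0 (vS * m)).

(* Real G-equivariant structure on {u,v}: closed degree-0 isomorphisms
   U_x = (U0 x, U1 x) : M -> M^x with U_{x2 x1} = (U_{x1})^{x2} o U_{x2}. *)
Definition RealEqStr (gT : finGroupType) (act : gT -> S -> S) (U0 U1 : gT -> S -> S) : Prop :=
  [/\ forall x, semilinear (act x^-1%g) (U0 x) /\ semilinear (act x^-1%g) (U1 x),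
      forall x, bijective (U0 x) /\ bijective (U1 x),
      forall x, closed_uv (U0 x) (U1 x)
    & forall (x1 x2 : gT) (m : S),
        U0 (x2 * x1)%g m = U0 x1 (U0 x2 m) /\ U1 (x2 * x1)%g m = U1 x1 (U1 x2 m)].

(* isomorphism in MF_Ĝ between ({u,v},U) and ({u,v},U'): a closed degree-0
   S-linear isomorphism f with U'_x o f = f^x o U_x *)
Definition EqStr_iso (gT : finGroupType) (U0 U1 U0' U1' : gT -> S -> S) : Prop :=
  exists f0 f1 : S -> S,
    [/\ semilinear id f0 /\ semilinear id f1,
        bijective f0 /\ bijective f1,
        closed_uv f0 f1
      & forall (x : gT) (m : S), U0' x (f0 m) = f0 (U0 x m) /\ U1' x (f1 m) = f1 (U1 x m)].

(* Main.v *)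
Require Import Defs.
From HB Require Import structures.
From mathcomp Require Import all_boot all_algebra all_fingroup.
From mathcomp Require Import boolp complex Rstruct zify.
Import GRing.Theory Num.Theory.
Local Open Scope ring_scope.
Set Implicit Arguments.

Lemma coef_mulE (R : comNzRingType) (f g : fps R) n :
  coef (f * g) n = \sum_(i < n.+1) \sum_(j < n.+1 | (i + j == n)%N) coef f i * coef g j.
Proof. by []. Qed.
Lemma coef_addE (R : comNzRingType) (f g : fps R) n : coef (f + g) n = coef f n + coef g n.
Proof. by []. Qed.
Lemma coef_1E (R : comNzRingType) n : coef (1 : fps R) n = (n == 0%N)%:R.
Proof. by []. Qed.
Lemma coef_0E (R : comNzRingType) n : coef (0 : fps R) n = 0.
Proof. by []. Qed.

Lemma coef_mul' (R : comNzRingType) (f g : fps R) n :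
  coef (f * g) n = \sum_(i < n.+1) coef f i * coef g (n - i).
Proof.
rewrite coef_mulE; apply: eq_bigr => i _.
have hi : (n - i < n.+1)%N by rewrite ltnS leq_subr.
rewrite (bigD1 (Ordinal hi)) /=; last by rewrite subnKC // -ltnS.
rewrite big1 ?addr0 // => j /andP[/eqP ij nj]; case/eqP: nj; apply: val_inj => /=.
by move: ij; clear; lia.
Qed.

Lemma coef_Cmul (R : comNzRingType) (c : R) g n : coef (fpsC c * g) n = c * coef g n.
Proof.
rewrite coef_mul' big_ord_recl /= subn0 big1 ?addr0 // => i _.
by rewrite mul0r.
Qed.

Lemma coef_Xmul0 (R : comNzRingType) (g : fps R) : coef (fpsX R * g) 0 = 0.
Proof. by rewrite coef_mul' big_ord_recl big_ord0 /= mul0r addr0. Qed.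

Lemma coef_XmulS (R : comNzRingType) (g : fps R) n : coef (fpsX R * g) n.+1 = coef g n.
Proof.
rewrite coef_mul' big_ord_recl /= mul0r add0r big_ord_recl /= mul1r subSS subn0.
rewrite big1 ?addr0 // => i _; by rewrite mul0r.
Qed.

Lemma fpsC_mul (R : comNzRingType) (a b : R) : fpsC a * fpsC b = fpsC (a * b).
Proof. by apply: fpsP => n; rewrite coef_Cmul /=; case: (n == 0%N); rewrite ?mulr0. Qed.

Lemma S_ext (f g : S) : (forall i j, coef2 f i j = coef2 g i j) -> f = g.
Proof. move=> H; apply: fpsP => j; apply: fpsP => i; exact: H. Qed.

Lemma coef2_add (f g : S) i j : coef2 (f + g) i j = coef2 f i j + coef2 g i j.
Proof. by []. Qed.

Lemma coef2_1 i j : coef2 1 i j = ((i == 0%N) && (j == 0%N))%:R.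
Proof.
rewrite /coef2 coef_1E; case: j => [|j] /=; last by rewrite andbF.
by rewrite andbT.
Qed.

Lemma coef2_umul (g : S) i j :
  coef2 (uS * g) i j = if i is k.+1 then coef2 g k j else 0.
Proof. by rewrite /coef2 /uS coef_Cmul; case: i => [|i]; rewrite ?coef_Xmul0 ?coef_XmulS. Qed.

Lemma coef2_vmul (g : S) i j :
  coef2 (vS * g) i j = if j is k.+1 then coef2 g i k else 0.
Proof. by rewrite /coef2 /vS; case: j => [|j]; rewrite ?coef_Xmul0 ?coef_XmulS. Qed.

Lemma coef2_scmul c (g : S) i j : coef2 (sc c * g) i j = c * coef2 g i j.
Proof. by rewrite /coef2 /sc coef_Cmul coef_Cmul. Qed.

Lemma coef2_u i j : coef2 uS i j = ((i == 1%N) && (j == 0%N))%:R.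
Proof. by rewrite -[uS]mulr1 coef2_umul; case: i => [|i]; rewrite ?coef2_1. Qed.
Lemma coef2_v i j : coef2 vS i j = ((i == 0%N) && (j == 1%N))%:R.
Proof. by rewrite -[vS]mulr1 coef2_vmul; case: j => [|j]; rewrite ?coef2_1 ?andbF. Qed.
Lemma coef2_sc c i j : coef2 (sc c) i j = c * ((i == 0%N) && (j == 0%N))%:R.
Proof. by rewrite -[sc c]mulr1 coef2_scmul coef2_1. Qed.

Lemma sc_mul a b : sc a * sc b = sc (a * b).
Proof. by apply: S_ext => i j; rewrite coef2_scmul !coef2_sc mulrA. Qed.
Lemma sc1 : sc 1 = 1.
Proof. by apply: S_ext => i j; rewrite coef2_sc coef2_1 mul1r. Qed.
Lemma sc_inj a b : sc a = sc b -> a = b.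
Proof. by move=> /(congr1 (fun f => coef2 f 0 0)); rewrite !coef2_sc !mulr1. Qed.

Lemma u_cancel (f g : S) : uS * f = uS * g -> f = g.
Proof. by move=> H; apply: S_ext => i j; have := congr1 (fun h => coef2 h i.+1 j) H; rewrite /= !coef2_umul. Qed.
Lemma v_cancel (f g : S) : vS * f = vS * g -> f = g.
Proof. by move=> H; apply: S_ext => i j; have := congr1 (fun h => coef2 h i j.+1) H; rewrite /= !coef2_vmul. Qed.

Lemma hom_u (c : S) : homogeneous 1 (uS * c) -> c = sc (coef2 c 0 0).
Proof.
move=> H; apply: S_ext => i j; rewrite coef2_sc.
have := H i.+1 j; rewrite coef2_umul => {}H.
case: i H => [|i]; case: j => [|j] H; rewrite /= ?mulr1 ?mulr0 //; apply: H; clear; lia.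
Qed.
Lemma hom_v (c : S) : homogeneous 1 (vS * c) -> c = sc (coef2 c 0 0).
Proof.
move=> H; apply: S_ext => i j; rewrite coef2_sc.
have := H i j.+1; rewrite coef2_vmul => {}H.
case: i H => [|i]; case: j => [|j] H; rewrite /= ?mulr1 ?mulr0 //; apply: H; clear; lia.
Qed.
Lemma hom1_u : homogeneous 1 uS.
Proof. by move=> i j ij; rewrite coef2_u; case: i ij => [|[|i]] //; case: j. Qed.
Lemma hom1_v : homogeneous 1 vS.
Proof. by move=> i j ij; rewrite coef2_v; case: i ij => [|i] //; case: j => [|[|j]]. Qed.

From mathcomp Require Import ring.

Section ActFacts.
Lemma actD (gT : finGroupType) pi (act : gT -> S -> S) (Hact : graded_action pi act) x f g :
  act x (f + g) = act x f + act x g.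
Proof. by case: Hact => _ _ Ha _ _; case: (Ha x). Qed.
Lemma actM (gT : finGroupType) pi (act : gT -> S -> S) (Hact : graded_action pi act) x f g :
  act x (f * g) = act x f * act x g.
Proof. by case: Hact => _ _ Ha _ _; case: (Ha x). Qed.
Lemma act1S (gT : finGroupType) pi (act : gT -> S -> S) (Hact : graded_action pi act) x :
  act x 1 = 1.
Proof. by case: Hact => _ _ Ha _ _; case: (Ha x). Qed.
Lemma act_sc (gT : finGroupType) pi (act : gT -> S -> S) (Hact : graded_action pi act) x c :
  act x (sc c) = sc (pconj (pi x) c).
Proof.
case: Hact => _ _ Ha _ _; case: (Ha x) => _ _ _ h1 hs.
by have := hs c 1; rewrite !mulr1 h1 mulr1.
Qed.
Lemma act_1g (gT : finGroupType) pi (act : gT -> S -> S) (Hact : graded_action pi act) f :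
  act 1%g f = f.
Proof. by case: Hact. Qed.
Lemma act_mulg (gT : finGroupType) pi (act : gT -> S -> S) (Hact : graded_action pi act) x y f :
  act (x * y)%g f = act x (act y f).
Proof. by case: Hact. Qed.
Lemma actK (gT : finGroupType) pi (act : gT -> S -> S) (Hact : graded_action pi act) x f :
  act x^-1%g (act x f) = f.
Proof. by rewrite -(act_mulg Hact) mulVg (act_1g Hact). Qed.
Lemma actVK (gT : finGroupType) pi (act : gT -> S -> S) (Hact : graded_action pi act) x f :
  act x (act x^-1%g f) = f.
Proof. by rewrite -(act_mulg Hact) mulgV (act_1g Hact). Qed.
Lemma act_hom (gT : finGroupType) pi (act : gT -> S -> S) (Hact : graded_action pi act) x f :
  homogeneous 1 f -> homogeneous 1 (act x f).
Proof. by case: Hact => _ _ _ Hd _; apply: Hd. Qed.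
Lemma act_uv (gT : finGroupType) pi (act : gT -> S -> S) (Hact : graded_action pi act) x :
  act x (uS * vS) = uS * vS.
Proof. by case: Hact. Qed.
End ActFacts.

Lemma semiE (t f : S -> S) : Defs.semilinear t f -> forall m, f m = t m * f 1.
Proof. by case=> _ H m; rewrite -H mulr1. Qed.

Lemma semi_unit (t f : S -> S) : Defs.semilinear t f -> bijective f -> unitS (f 1).
Proof.
move=> Hs [g _ gK]; exists (t (g 1)); rewrite mulrC -(semiE Hs); exact: gK.
Qed.

Lemma sc_inv_mul c : c != 0 -> sc c^-1 * sc c = 1.
Proof. by move=> c0; rewrite sc_mul mulVf // sc1. Qed.

Lemma U_id1 (gT : finGroupType) (act : gT -> S -> S) U0 U1 :
  RealEqStr act U0 U1 -> forall m, U0 1%g m = m /\ U1 1%g m = m.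
Proof.
case=> _ Hb _ Hc m; have [[g0 g0K _] [g1 g1K _]] := Hb 1%g.
have [e0 e1] := Hc 1%g 1%g m; rewrite mulg1 in e0 e1.
split; [by have := g0K (U0 1%g m); rewrite -e0 g0K | by have := g1K (U1 1%g m); rewrite -e1 g1K].
Qed.

Lemma forms (gT : finGroupType) pi (act : gT -> S -> S) (Hact : graded_action pi act) U0 U1 :
  RealEqStr act U0 U1 -> forall y, exists l : C,
    [/\ act y uS = sc l * uS, act y vS = sc l^-1 * vS & l != 0].
Proof.
move=> HU y; case: HU => Hs Hb Hc _.
have [s0 s1] := Hs y^-1%g; have [b0 b1] := Hb y^-1%g; have [c0 c1] := Hc y^-1%g.
rewrite invgK in s0 s1.
have [a' Ha] := semi_unit s0 b0; have [b' Hb'] := semi_unit s1 b1.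
set a := U0 y^-1%g 1 in Ha *; set b := U1 y^-1%g 1 in Hb' *.
have eu : uS * a = act y uS * b by rewrite /a c0 (semiE s1) mulr1.
have ev : vS * b = act y vS * a by rewrite /b c1 (semiE s0) mulr1.
have eu' : act y uS = uS * (a * b').
  by rewrite mulrA eu -mulrA Hb' mulr1.
have ev' : act y vS = vS * (b * a').
  by rewrite mulrA ev -mulrA Ha mulr1.
have hu := hom_u (eq_ind _ _ (act_hom Hact y hom1_u) _ eu').
have hv := hom_v (eq_ind _ _ (act_hom Hact y hom1_v) _ ev').
set l := coef2 (a * b') 0 0 in hu; set mu := coef2 (b * a') 0 0 in hv.
have Eu : act y uS = sc l * uS by rewrite eu' hu mulrC.
have Ev : act y vS = sc mu * vS by rewrite ev' hv mulrC.
have lm : l * mu = 1.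
  apply: sc_inj; rewrite sc1 -sc_mul; apply: u_cancel; apply: v_cancel.
  have := act_uv Hact y; rewrite (actM Hact) Eu Ev => E.
  transitivity (sc l * uS * (sc mu * vS)).
    ring.
  rewrite E; ring.
have l0 : l != 0.
  apply/eqP => l0; move: lm; rewrite l0 mul0r => h.
  by apply: (negP (oner_neq0 C)); rewrite -h.
exists l; split; [exact: Eu| |exact: l0].
rewrite Ev; congr (sc _ * _); apply: (mulfI l0); by rewrite lm mulfV.
Qed.

Lemma twist_semi (gT : finGroupType) pi (act : gT -> S -> S) (Hact : graded_action pi act) x w :
  Defs.semilinear (act x) (fun m => act x m * w).
Proof.
split=> [m m'|r m]; first by rewrite (actD Hact) mulrDl.
by rewrite (actM Hact) mulrA.
Qed.

Lemma twist_bij (gT : finGroupType) pi (act : gT -> S -> S) (Hact : graded_action pi act) x w :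
  unitS w -> bijective (fun m => act x m * w).
Proof.
case=> w' ww'; exists (fun m => act x^-1%g (m * w')) => m /=.
  by rewrite -mulrA ww' mulr1 (actK Hact).
by rewrite -{1}[x]invgK (actK Hact) -mulrA [w' * w]mulrC ww' mulr1.
Qed.

Lemma unit_mul a b : unitS a -> unitS b -> unitS (a * b).
Proof. by case=> a' ha [b' hb]; exists (a' * b'); rewrite mulrACA ha hb mulr1. Qed.
Lemma unit_sc c : c != 0 -> unitS (sc c).
Proof. by move=> c0; exists (sc c^-1); rewrite mulrC sc_inv_mul. Qed.

Lemma construct (gT : finGroupType) pi (act : gT -> S -> S) (Hact : graded_action pi act)
  chi (Hz : Z1_Cpi pi chi)
  (Huv : forall x, act x uS = sc (chi x) * uS /\ act x vS = sc (chi x)^-1 * vS)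
  c (Hc : Z1_S act c) :
  RealEqStr act (fun x m => act x^-1%g m * (sc (chi x^-1%g) * c x^-1%g))
                (fun x m => act x^-1%g m * c x^-1%g).
Proof.
case: Hz => chi0 chi1 chiM; case: Hc => cu c1 cM.
split=> [x|x|x|x1 x2 m].
- by split; apply: twist_semi Hact _ _.
- by split; apply: twist_bij Hact _ _ _; rewrite ?unit_mul ?unit_sc //; apply: unit_mul; [apply: unit_sc|].
- have [eu ev] := Huv x^-1%g.
  split=> m /=; rewrite (actM Hact) ?eu ?ev.
    ring.
  have h := sc_inv_mul _ (chi0 x^-1%g).
  rewrite -[LHS]mul1r -h; ring.
- rewrite /= invMg (act_mulg Hact) chiM cM -sc_mul !(actM Hact) (act_sc Hact).
  split; ring.
Qed.

Definition chiOf (gT : finGroupType) (act : gT -> S -> S) (x : gT) : C := coef2 (act x uS) 1 0.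
Arguments chiOf {gT}.

Lemma coef2_u10 : coef2 uS 1 0 = 1.
Proof. rewrite coef2_u /=; exact: mulr1n. Qed.
Lemma part1_fw (gT : finGroupType) pi (act : gT -> S -> S) (Hact : graded_action pi act) U0 U1 :
  RealEqStr act U0 U1 ->
  Z1_Cpi pi (chiOf act) /\
  forall x, act x uS = sc (chiOf act x) * uS /\ act x vS = sc (chiOf act x)^-1 * vS.
Proof.
move=> HU.
have F x : [/\ act x uS = sc (chiOf act x) * uS, act x vS = sc (chiOf act x)^-1 * vS
   & chiOf act x != 0].
  have [l [eu ev l0]] := forms Hact HU x.
  have -> : chiOf act x = l by rewrite /chiOf eu coef2_scmul coef2_u10 mulr1.
  by split.
split; last by move=> x; have [] := F x.
split; first by move=> x; have [] := F x.
  rewrite /chiOf. Time rewrite (act_1g Hact). Time exact: coef2_u10.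
move=> x y; rewrite {1}/chiOf (act_mulg Hact).
have [-> _ _] := F y.
rewrite (actM Hact) (act_sc Hact).
have [-> _ _] := F x.
rewrite coef2_scmul coef2_scmul coef2_u10 mulr1.
exact: mulrC.
Qed.

Lemma Phi_Z1 (gT : finGroupType) pi (act : gT -> S -> S) (Hact : graded_action pi act) U0 U1 :
  RealEqStr act U0 U1 -> Z1_S act (fun x => U1 x^-1%g 1).
Proof.
move=> HU; have id1 := U_id1 HU; case: HU => Hs Hb Hc HC.
split.
- move=> x; exact: semi_unit (Hs _).2 (Hb _).2.
- by rewrite invg1; case: (id1 1).
- move=> x y; rewrite invMg; have [_ ->] := HC x^-1%g y^-1%g 1.
  by rewrite (semiE (Hs _).2) invgK mulrC.
Qed.

Lemma unit1 : unitS 1.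
Proof. by exists 1; rewrite mulr1. Qed.

Lemma part2b (gT : finGroupType) pi (act : gT -> S -> S) (Hact : graded_action pi act)
  chi (Hz : Z1_Cpi pi chi)
  (Huv : forall x, act x uS = sc (chi x) * uS /\ act x vS = sc (chi x)^-1 * vS)
  c (Hc : Z1_S act c) :
  exists U0 U1, RealEqStr act U0 U1 /\ cohomologous act (fun x => U1 x^-1%g 1) c.
Proof.
exists (fun x m => act x^-1%g m * (sc (chi x^-1%g) * c x^-1%g)), (fun x m => act x^-1%g m * c x^-1%g).
split; first exact: (construct Hact Hz Huv Hc).
exists (1 : S); split; first exact: unit1.
by move=> x /=; rewrite invgK !(act1S Hact) !mul1r mulr1.
Qed.

Lemma part2c (gT : finGroupType) pi (act : gT -> S -> S) (Hact : graded_action pi act)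
  U0 U1 U0' U1' : RealEqStr act U0 U1 -> RealEqStr act U0' U1' ->
  (EqStr_iso U0 U1 U0' U1' <->
   cohomologous act (fun x => U1 x^-1%g 1) (fun x => U1' x^-1%g 1)).
Proof.
case=> Hs Hb Hc _ [Hs' Hb' Hc' _]; split.
- move=> [f0 [f1 [[sf0 sf1] [bf0 bf1] _ Hf]]].
  exists (f1 1); split; first exact: semi_unit sf1 bf1.
  move=> x /=; have [_ e] := Hf x^-1%g 1.
  move: e; rewrite (semiE (Hs' _).2 (f1 1)) invgK (semiE sf1 (U1 x^-1%g 1)) /= => e.
  by rewrite mulrC e mulrC.
- case=> b [[b' hb] Hcoh].
  exists (fun m => m * b), (fun m => m * b); split.
  + have h : Defs.semilinear id (fun m => m * b).
      by split=> [m m'|r m]; [rewrite mulrDl|rewrite mulrA].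
    by [].
  + have h : bijective (fun m => m * b).
      by exists (fun m => m * b') => m /=; rewrite -mulrA ?hb ?[b' * b]mulrC ?hb mulr1.
    by [].
  + by split=> m; rewrite mulrA.
  move=> x m; have e := Hcoh x^-1%g; rewrite /= invgK in e.
  split; last first.
    rewrite (semiE (Hs' _).2) (semiE (Hs _).2) (actM (Hact)) -!mulrA; congr (_ * _).
    by rewrite mulrC e mulrC.
  have ca : uS * U0 x 1 = act x^-1%g uS * U1 x 1 by rewrite (Hc x).1 (semiE (Hs _).2) mulr1.
  have ca' : uS * U0' x 1 = act x^-1%g uS * U1' x 1 by rewrite (Hc' x).1 (semiE (Hs' _).2) mulr1.
  have key : U0' x 1 * act x^-1%g b = b * U0 x 1.
    by apply: u_cancel; rewrite mulrA ca' -mulrA e [RHS]mulrCA ca mulrCA.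
  rewrite (semiE (Hs' _).1) (semiE (Hs _).1) (actM (Hact)) -!mulrA; congr (_ * _).
  by rewrite mulrC key mulrC.
Qed.

Lemma Z1_one (gT : finGroupType) pi (act : gT -> S -> S) (Hact : graded_action pi act) :
  Z1_S act (fun=> 1).
Proof. split=> [x|//|x y]; [exact: unit1 | by rewrite (act1S Hact) mulr1]. Qed.

Unset Implicit Arguments.

Theorem mainTheorem8 (gT : finGroupType) (pi : gT -> bool) (act : gT -> S -> S)
  (pi_morph : forall x y : gT, pi (x * y)%g = pi x (+) pi y)
  (Hact : graded_action pi act) :
  ((exists U0 U1 : gT -> S -> S, RealEqStr act U0 U1) <->
   (exists chi : gT -> C, Z1_Cpi pi chi /\
      forall x : gT, act x uS = sc (chi x) * uS /\ act x vS = sc (chi x)^-1 * vS))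
  /\
  ((exists U0 U1 : gT -> S -> S, RealEqStr act U0 U1) ->
   exists Phi : (gT -> S -> S) -> (gT -> S -> S) -> gT -> S,
     [/\ forall U0 U1, RealEqStr act U0 U1 -> Z1_S act (Phi U0 U1),
         forall c, Z1_S act c ->
           exists U0 U1, RealEqStr act U0 U1 /\ cohomologous act (Phi U0 U1) c
       & forall U0 U1 U0' U1', RealEqStr act U0 U1 -> RealEqStr act U0' U1' ->
           (EqStr_iso U0 U1 U0' U1' <-> cohomologous act (Phi U0 U1) (Phi U0' U1'))]).
Proof.
split.
  split.
    move=> [U0 [U1 HU]]; have [Hz Huv] := part1_fw Hact HU.
    by exists (chiOf act); split.
  move=> [chi [Hz Huv]].
  exists (fun x m => act x^-1%g m * (sc (chi x^-1%g) * 1)), (fun x m => act x^-1%g m * 1).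
  exact: (construct Hact Hz Huv (Z1_one Hact)).
move=> [U0 [U1 HU]]; have [Hz Huv] := part1_fw Hact HU.
exists (fun V0 V1 x => V1 x^-1%g 1); split.
- move=> V0 V1 HV /=; exact (Phi_Z1 Hact HV).
- move=> c Hc /=; exact (part2b Hact Hz Huv Hc).
- move=> V0 V1 V0' V1' HV HV' /=; exact (part2c Hact HV HV').
Qed.
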